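(* Let $p=\sum_{i=0}^n c_iT^i$ be a polynomial of degree $n\ge1$ over $\mathbb S$ and let $a\in\{1,-1\}$ be a root of $p$. Define $l=\min\{i\in\mathbb N: c_i\ne0\}$ and $k=\min\{i\in\mathbb N: c_{i+1}=-a^{i+1-l}c_l\}$. Define $d_{n-1},\dots,d_0\in\mathbb S$ recursively in decreasing order of $i$ by: $d_i=c_{i+1}$ if $c_{i+1}\ne0$ and $i>k$; $d_i=ad_{i+1}$ if $c_{i+1}=0$ and $i>k$; $d_i=-a^{i+l-1}c_l$ if $l\le i\le k$; $d_i=0$ if $0\le i<l$. Then $q=\sum_{i=0}^{n-1}d_iT^i$ satisfies $p\in(T-a)\boxdot q$, i.e. $c_n=d_{n-1}$, $c_0=-ad_0$, and $c_i\in(-ad_i)\boxplus d_{i-1}$ for $i=1,\dots,n-1$.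
   Context: The sign hyperfield $\mathbb S$ is $\{0,1,-1\}$ with the usual multiplication and hyperaddition $0\boxplus a=\{a\}$, $1\boxplus1=\{1\}$, $(-1)\boxplus(-1)=\{-1\}$, $1\boxplus(-1)=\{0,1,-1\}$. Iterated sums: $\boxplus_{i=1}^n a_i=\bigcup_{b\in\boxplus_{i=1}^{n-1}a_i} b\boxplus a_n$. Polynomials over $\mathbb S$ are finitely supported sequences $\sum c_iT^i$ of degree the largest $k$ with $c_k\ne0$; hyperproduct $p\boxdot q=\{\sum e_iT^i : e_i\in \boxplus_{k+l=i} c_kd_l\}$. An element $a\in\mathbb S$ is a root of $p=\sum c_iT^i$ if $0\in\boxplus_i c_ia^i$. *)

(* Defs.v *)
From HB Require Import structures.
From mathcomp Require Import all_boot all_algebra.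
Set Implicit Arguments. Unset Strict Implicit. Unset Printing Implicit Defensive.

Inductive sgn := S0 | Sp | Sm.   (* 0, 1, -1 *)

Definition sgn_eqb (x y : sgn) : bool :=
  match x, y with S0, S0 | Sp, Sp | Sm, Sm => true | _, _ => false end.
Lemma sgn_eqP : Equality.axiom sgn_eqb.
Proof. by case; case; constructor. Qed.
HB.instance Definition _ := hasDecEq.Build sgn sgn_eqP.

Definition smul (x y : sgn) : sgn :=
  match x, y with
  | S0, _ | _, S0 => S0
  | Sp, z | z, Sp => z
  | Sm, Sm => Sp
  end.
Definition sopp (x : sgn) : sgn := smul Sm x.

(* powers a^n (n : nat) and a^z (z : int); inverse of 1 is 1, of -1 is -1 *)
Fixpoint spow (a : sgn) (n : nat) : sgn :=
  if n is m.+1 then smul a (spow a m) else Sp.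
Definition sinv (a : sgn) : sgn := a.
Definition spowz (a : sgn) (z : int) : sgn :=
  match z with Posz n => spow a n | Negz n => spow (sinv a) n.+1 end.

(* hyperaddition, as the (list of elements of the) set a ⊞ b *)
Definition hadd (x y : sgn) : seq sgn :=
  match x, y with
  | S0, z | z, S0 => [:: z]
  | Sp, Sp => [:: Sp]
  | Sm, Sm => [:: Sm]
  | _, _ => [:: S0; Sp; Sm]
  end.

(* iterated hypersum  ⊞_{i=1}^n a_i = ⋃_{b ∈ ⊞_{i=1}^{n-1} a_i} b ⊞ a_n *)
Definition hsum (s : seq sgn) : seq sgn :=
  match s with
  | [::] => [:: S0]
  | x :: s' => foldl (fun acc y => flatten [seq hadd b y | b <- acc]) [:: x] s'
  end.

Definition is_poly_deg (c : nat -> sgn) (n : nat) : Prop :=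
  c n != S0 /\ (forall i, (n < i)%N -> c i = S0).

Definition is_root (c : nat -> sgn) (n : nat) (a : sgn) : Prop :=
  S0 \in hsum [seq smul (c i) (spow a i) | i <- iota 0 n.+1].

(* Main.v *)
Require Import Defs.
From mathcomp Require Import all_boot all_algebra zify.

Lemma spow_odd a m : (a = Sp \/ a = Sm) -> spow a m = if odd m then a else Sp.
Proof. move=> ha; elim: m => [|m IH] //=; rewrite IH; case: (odd m); case: ha => ->. all: by []. Qed.

Lemma spowz_sub a m n : (a = Sp \/ a = Sm) ->
  spowz a (m%:Z - n%:Z) = if odd (m + n) then a else Sp.
Proof.
move=> ha; case: (leqP n m) => h.
  have -> : (m%:Z - n%:Z)%R = Posz (m - n) by lia.
  rewrite /= spow_odd //; have := subnK h => e; rewrite -{2}e !oddD.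
  by case: (odd (m-n)); case: (odd n).
have -> : (m%:Z - n%:Z)%R = Negz (n - m).-1 by rewrite NegzE; lia.
rewrite /spowz /sinv prednK ?subn_gt0 // spow_odd //.
have := subnK (ltnW h) => e; rewrite -{2}e !oddD.
by case: (odd (n-m)); case: (odd m).
Qed.

Lemma ltn_pred {n} : (0 < n)%N -> (n.-1 < n)%N.
Proof. by rewrite ltn_predL. Qed.

Lemma hadd_self x y : x != S0 -> x \in hadd y x.
Proof. by case: x; case: y. Qed.

Theorem mainTheorem11 (n : nat) (c : nat -> sgn) (a : sgn) (l k : nat)
    (d : nat -> sgn) :
  (1 <= n)%N ->
  is_poly_deg c n ->
  (a = Sp \/ a = Sm) ->
  is_root c n a ->
  (* l = min { i | c_i <> 0 } *)
  c l != S0 -> (forall i, (i < l)%N -> c i = S0) ->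
  (* k = min { i | c_(i+1) = - a^(i+1-l) c_l } *)
  c k.+1 = sopp (smul (spowz a (k.+1%:Z - l%:Z)) (c l)) ->
  (forall i, (i < k)%N -> c i.+1 <> sopp (smul (spowz a (i.+1%:Z - l%:Z)) (c l))) ->
  (* recursive definition of d_(n-1), ..., d_0 *)
  (forall i, (i < n)%N ->
     ((k < i)%N -> c i.+1 != S0 -> d i = c i.+1) /\
     ((k < i)%N -> c i.+1 = S0 -> d i = smul a (d i.+1)) /\
     ((l <= i <= k)%N -> d i = sopp (smul (spowz a (i%:Z + l%:Z - 1)) (c l))) /\
     ((i < l)%N -> d i = S0)) ->
  c n = d n.-1 /\ c 0%N = sopp (smul a (d 0%N)) /\
  (forall i, (1 <= i <= n.-1)%N -> c i \in hadd (sopp (smul a (d i))) (d i.-1)).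
Proof.
move=> n1 [cn cgt] ha _ cl cltl ck _ hd.
rewrite spowz_sub // in ck.
have hd3 : forall i, (i < n)%N -> (l <= i <= k)%N ->
    d i = sopp (smul (if odd (i + 1 + l) then a else Sp) (c l)).
  move=> i hi hik; have [_ [_ [h _]]] := hd i hi; rewrite h //.
  have -> : (i%:Z + l%:Z - 1)%R = ((i + l)%N%:Z - 1%N%:Z)%R by lia.
  by rewrite spowz_sub // addnAC.
have hnz : forall m, sopp (smul (if odd m then a else Sp) (c l)) != S0.
  by move=> m; case: (odd m); case: ha => E; rewrite ?E; move: cl; case: (c l).
have hlk : (l <= k)%N.
  rewrite leqNgt; apply/negP => hkl.
  case: (ltngtP k.+1 l) => [h||h].
  - by move: (hnz (k.+1 + l)); rewrite -ck cltl.
  - by rewrite ltnNge hkl.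
  - by move: ck cl; rewrite h addnn odd_double; case: (c l).
have hkn : (k < n)%N.
  rewrite ltnNge; apply/negP => hnk.
  by move: (hnz (k.+1 + l)); rewrite -ck cgt.
split.
  case: (ltngtP k n.-1) => h.
  - have [h1 _] := hd n.-1 (ltn_pred n1).
    by rewrite prednK // in h1; rewrite h1.
  - by move: h; rewrite ltnNge -ltnS prednK // hkn.
  - have e : k.+1 = n by rewrite h prednK.
    by rewrite -h hd3 // ?hlk ?leqnn // -e ck addn1.
split.
  case: (posnP l) => hl.
    rewrite hd3 // ?hl //=; move: cl; rewrite hl.
    by case: ha => E; rewrite ?E; case: (c 0%N).
  have [_ [_ [_ h]]] := hd 0 n1; rewrite h // (cltl 0%N hl); by case: ha => ->.
move=> i /andP [i1 iq].
have hin : (i < n)%N by move: iq; rewrite -ltnS prednK.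
have hi1 : (i.-1 < n)%N by apply: leq_ltn_trans hin; apply: leq_pred.
case: (ltngtP i l) => hil.
- have [_ [_ [_ h]]] := hd i hin; have [_ [_ [_ h']]] := hd i.-1 hi1.
  have hl1 : (i.-1 < l)%N by apply: leq_ltn_trans hil; apply: leq_pred.
  by rewrite h // h' // cltl //; case: ha => ->.
- case: (leqP i k) => hik.
    have hl' : (l <= i.-1 <= k)%N.
      by rewrite -ltnS prednK // hil (leq_trans (leq_pred _) hik).
    rewrite hd3 ?hin ?(ltnW hil) ?hik // hd3 ?hi1 //.
    rewrite !addn1 prednK // addSn /=.
    have := hnz (i + l); have := hnz (i + l).+1 => /=.
    case: (odd (i + l)); case: ha => E; rewrite ?E; case: (c i); case: (c l) => //.
  case: (ltngtP i k.+1) => hik2.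
  + by move: hik2; rewrite ltnS leqNgt hik.
  + have hk1 : (k < i.-1)%N by rewrite -ltnS prednK.
    have [h1 [h2 _]] := hd i.-1 hi1; rewrite prednK // in h1 h2.
    case: (eqVneq (c i) S0) => hc.
      by rewrite hc h2 //; case: ha => E; rewrite ?E; case: (d i).
    by rewrite h1 // hadd_self.
  + subst i; rewrite /= (hd3 k) // ?hlk ?leqnn // addn1 -ck hadd_self //.
    by rewrite ck hnz.
- subst i; have [_ [_ [_ h']]] := hd l.-1 hi1.
  rewrite h' ?prednK // ?ltn_pred // hd3 ?hin ?leqnn ?hlk //.
  rewrite addnAC addnn oddD odd_double /=.
  by move: cl; case: ha => E; rewrite ?E; case: (c l).
Qed.
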